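(* Work in ZFC together with the Continuum Hypothesis. Let $(\Omega,\mathcal{F})$ be a measurable space with a right-continuous filtration $\mathbb{F}=(\mathcal{F}_t)_{t\in[0,1]}$, $\mathcal{P}$ a family of probability measures on $(\Omega,\mathcal{F})$, and $\mathbb{F}^*=(\mathcal{F}^*_t)_{t\in[0,1]}$ with $\mathcal{F}^*_t:=\bigcap_{P\in\mathcal{P}}\mathcal{F}_t\vee\mathcal{N}^P$, where $\mathcal{N}^P$ is the collection of $(\mathcal{F},P)$-null sets. Let $(Y^n)_{n\ge1}$ be a sequence of $\mathbb{F}^*$-adapted càdlàg processes. Assume that for each $P\in\mathcal{P}$ there exists a càdlàg process $Y^P$ such that $Y^n_t\to Y^P_t$ in $P$-probability for all $t\in[0,1]$. Then there exists an $\mathbb{F}^*$-adapted càdlàg process $Y$ such that $Y=Y^P$ $P$-a.s. for all $P\in\mathcal{P}$. *)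

(* Defs.v *)
From HB Require Import structures.
From mathcomp Require Import all_boot all_order all_algebra.
From mathcomp Require Import all_classical all_reals all_analysis.
Set Implicit Arguments. Unset Strict Implicit. Unset Printing Implicit Defensive.
Import Order.TTheory GRing.Theory Num.Theory.
Import numFieldNormedType.Exports.
Local Open Scope classical_set_scope.
Local Open Scope ring_scope.

Definition CH (R : realType) : Prop :=
  forall A : set R, countable A \/ (A #= [set: R])%card.

Section defs.
Context {d : measure_display} {T : measurableType d} {R : realType}.

Definition is_filtration (F : R -> set (set T)) : Prop :=
  (forall t, 0 <= t <= 1 -> sigma_algebra setT (F t) /\ F t `<=` measurable) /\
  (forall s t, 0 <= s -> s <= t -> t <= 1 -> F s `<=` F t).

Definition right_continuous_filtration (F : R -> set (set T)) : Prop :=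
  forall t, 0 <= t < 1 -> F t = \bigcap_(s in [set s | t < s <= 1]) F s.

Definition Fstar (Pfam : set (probability T R)) (F : R -> set (set T))
  : R -> set (set T) :=
  fun t => \bigcap_(P in Pfam) <<s F t `|` [set N | P.-negligible N] >>.

Definition adapted (G : R -> set (set T)) (Y : R -> T -> R) : Prop :=
  forall t, 0 <= t <= 1 -> forall B : set R, measurable B -> G t (Y t @^-1` B).

Definition cadlag (Y : R -> T -> R) : Prop :=
  forall w : T,
    (forall t, 0 <= t < 1 -> (fun s => Y s w) @ t^'+ --> Y t w) /\
    (forall t, 0 < t <= 1 -> cvg ((fun s => Y s w) @ t^'-)).

(* convergence in P-probability (via outer P-probability, so that the
   events need not be F-measurable) *)
Definition cvg_in_prob (P : probability T R) (Xn : nat -> T -> R) (X : T -> R)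
  : Prop :=
  forall eps : R, 0 < eps -> forall delta : R, 0 < delta ->
    \forall n \near \oo, exists A : set T,
      [/\ measurable A, [set w | eps < `|Xn n w - X w|] `<=` A &
          (P A <= delta%:E)%E].
End defs.

(* Main.v *)
Require Import Defs.
From HB Require Import structures.
From mathcomp Require Import all_boot all_order all_algebra.
From mathcomp Require Import all_classical all_reals all_analysis.
From mathcomp Require Import ring lra.
Import Order.TTheory GRing.Theory Num.Theory.
Import numFieldNormedType.Exports.
Local Open Scope classical_set_scope.
Local Open Scope ring_scope.
(* Part 1: combinatorics of almost-inclusion chains *)
Definition subq (A C : set nat) := exists N, forall n, (N <= n)%N -> A n -> C n.
Definition infs (A : set nat) := forall N, exists n, (N <= n)%N /\ A n.

Lemma subq_trans A B C : subq A B -> subq B C -> subq A C.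
Proof.
move=> [N1 h1] [N2 h2]; exists (maxn N1 N2) => n hn An.
apply: h2; first by apply: leq_trans hn; exact: leq_maxr.
by apply: h1 => //; apply: leq_trans hn; exact: leq_maxl.
Qed.

Lemma subq_sub A B : A `<=` B -> subq A B.
Proof. by move=> AB; exists 0%N => n _ /AB. Qed.

Lemma incr_ge (b : nat -> nat) : (forall k, (b k < b k.+1)%N) -> forall k, (k <= b k)%N.
Proof.
move=> hb; elim=> // k ih; apply: leq_ltn_trans ih (hb k).
Qed.

Lemma incr_mono (b : nat -> nat) : (forall k, (b k < b k.+1)%N) ->
  forall j k, (j < k)%N -> (b j < b k)%N.
Proof.
move=> hb j; elim=> // k ih; rewrite ltnS leq_eqVlt => /orP[/eqP->//|/ih h].
exact: ltn_trans h (hb k).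
Qed.

Lemma incr_le (b : nat -> nat) : (forall k, (b k < b k.+1)%N) ->
  forall j k, (b j <= b k)%N -> (j <= k)%N.
Proof.
move=> hb j k h; rewrite leqNgt; apply/negP => hk; have := @incr_mono b hb _ _ hk.
by move=> hk'; move: (leq_trans hk' h); rewrite ltnn.
Qed.

Lemma pseudo_seq (C : nat -> set nat) :
  (forall k, infs [set n | forall j, (j <= k)%N -> C j n]) ->
  exists B, infs B /\ forall j, subq B (C j).
Proof.
move=> hC.
have [pick' hpick'] := @choice (nat * nat) nat (fun km n =>
    (km.2 <= n)%N /\ forall j, (j <= km.1)%N -> C j n) (fun km => hC km.1 km.2).
pose pick k m := pick' (k, m).
have hpick k m : (m <= pick k m)%N /\ forall j, (j <= k)%N -> C j (pick k m).
  exact: (hpick' (k, m)).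
pose b := fix b k := if k is k'.+1 then pick k (b k').+1 else pick 0%N 0%N.
have hb : forall k, (b k < b k.+1)%N by move=> k; exact: (hpick k.+1 (b k).+1).1.
have hbC : forall k j, (j <= k)%N -> C j (b k).
  by case=> [|k] j hj; [exact: (hpick 0%N 0%N).2|exact: (hpick k.+1 _).2].
exists (range b); split.
  move=> N; exists (b N); split; last by exists N.
  exact: (@incr_ge b hb).
move=> j; exists (b j) => n hn [k _ hk]; subst n.
apply: hbC; apply: (@incr_le b hb); exact: hn.
Qed.

Lemma pseudo_chain (I : Type) (lt : I -> I -> Prop) (S : set I) (A : I -> set nat) :
  (forall x y, lt x y \/ x = y \/ lt y x) ->
  countable S ->
  (forall y, S y -> infs (A y)) ->
  (forall y y', S y -> S y' -> lt y y' -> subq (A y') (A y)) ->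
  exists B, infs B /\ forall y, S y -> subq B (A y).
Proof.
move=> tri cS infA ch.
have [[y0 Sy0]|S0] := pselect (exists y, S y); last first.
  exists setT; split; first by move=> N; exists N.
  by move=> y Sy; exfalso; apply: S0; exists y.
have [f finj] := countable_injP S cS.
pose g n := match pselect (exists y, S y /\ f y = n) with
  | left h => proj1_sig (cid h) | right _ => y0 end.
have gS n : S (g n).
  by rewrite /g; case: pselect => // h; case: cid => y [].
have gf y : S y -> g (f y) = y.
  move=> Sy; rewrite /g; case: pselect => [h|]; last by move=> []; exists y.
  case: cid => z [Sz fz] /=; apply: finj => //; exact/mem_set.
have fin k : exists z, S z /\ exists N, forall n, (N <= n)%N -> A z n ->
    forall j, (j <= k)%N -> A (g j) n.
  elim: k => [|k [z [Sz [N hN]]]].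
    exists (g 0%N); split => //; exists 0%N => n _ h j; rewrite leqn0 => /eqP ->//.
  have [lzg|[zg|lgz]] := tri z (g k.+1).
  - have [N1 h1] := ch _ _ Sz (gS _) lzg.
    exists (g k.+1); split => //; exists (maxn N N1) => n hn An j.
    rewrite leq_eqVlt => /orP[/eqP->//|]; rewrite ltnS => jk.
    apply: hN => //; first exact: leq_trans (leq_maxl _ _) hn.
    apply: h1 => //; exact: leq_trans (leq_maxr _ _) hn.
  - exists z; split => //; exists N => n hn An j.
    rewrite leq_eqVlt => /orP[/eqP->|]; first by rewrite -zg.
    by rewrite ltnS; exact: hN.
  - have [N1 h1] := ch _ _ (gS _) Sz lgz.
    exists z; split => //; exists (maxn N N1) => n hn An j.
    rewrite leq_eqVlt => /orP[/eqP->|]; first by apply: h1 => //; exact: leq_trans (leq_maxr _ _) hn.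
    rewrite ltnS => jk; apply: hN => //; exact: leq_trans (leq_maxl _ _) hn.
have [B [iB sB]] : exists B, infs B /\ forall j, subq B (A (g j)).
  apply: pseudo_seq => k M.
  have [z [Sz [N hN]]] := fin k.
  have [n [hn Azn]] := infA z Sz (maxn M N).
  exists n; split; first exact: leq_trans (leq_maxl _ _) hn.
  move=> j jk; apply: hN => //; exact: leq_trans (leq_maxr _ _) hn.
exists B; split => // y Sy; rewrite -(gf y Sy); exact: sB.
Qed.

(* transfinite construction *)
Section chain.
Context (I : Type) (lt : I -> I -> Prop) (wf : well_founded lt)
  (tri : forall x y, lt x y \/ x = y \/ lt y x)
  (cnt : forall x, countable [set y | lt y x])
  (H : I -> set nat -> Prop)
  (dense : forall x B, infs B -> exists A, A `<=` B /\ infs A /\ H x A).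

Definition chain_spec (x : I) (rec : forall y, lt y x -> set nat) (A : set nat) :=
  infs A /\ H x A /\ forall y (h : lt y x), subq A (rec y h).

Definition chain_step (x : I) (rec : forall y, lt y x -> set nat) : set nat :=
  match pselect (exists A, chain_spec x rec A) with
  | left h => proj1_sig (cid h) | right _ => setT end.

Definition chainA := Fix wf (fun _ => set nat) chain_step.

Lemma chainA_eq x : chainA x = chain_step x (fun y _ => chainA y).
Proof.
rewrite /chainA Fix_eq // => {}x f g fg.
have -> // : f = g.
apply: functional_extensionality_dep => y.
apply: functional_extensionality_dep => p; exact: fg.
Qed.

Lemma chainA_prop x : infs (chainA x) /\ H x (chainA x) /\
  forall y, lt y x -> subq (chainA x) (chainA y).
Proof.
elim/(well_founded_ind wf): x => x IH.
have ex : exists A, chain_spec x (fun y (_ : lt y x) => chainA y) A.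
  have [B [iB sB]] := @pseudo_chain I lt [set y | lt y x] chainA tri (cnt x)
    (fun y h => (IH y h).1) (fun y y' _ h' l => (IH y' h').2.2 y l).
  have [A [AB [iA HA]]] := dense x B iB.
  exists A; split => //; split => // y h.
  apply: subq_trans (sB y h); exact: subq_sub.
rewrite chainA_eq /chain_step; case: pselect => [h|]; last by move/(_ ex).
case: cid => A [iA [HA sA]] /=; split => //; split => // y h; exact: sA.
Qed.

End chain.

From mathcomp Require wochoice.
Section wo.
Context (U : pointedType) (r : rel U) (wo : wochoice.well_order r).

Lemma wo_min (A : set U) : (exists x, A x) -> exists z, A z /\ forall x, A x -> r z x.
Proof.
move=> [x Ax].
have [|z [[zA lb] _]] := wo (fun x => `[< A x >]); first by exists x; rewrite unfold_in; exact/asboolP.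
exists z; split; first by move: zA; rewrite unfold_in => /asboolP.
by move=> y Ay; apply: lb; rewrite unfold_in; exact/asboolP.
Qed.

Lemma wo_min_uniq (A : set U) z z' : A z -> (forall x, A x -> r z x) ->
  A z' -> (forall x, A x -> r z' x) -> z = z'.
Proof.
move=> Az lz Az' lz'.
have [|m [_ um]] := wo (fun x => `[< A x >]); first by exists z; rewrite unfold_in; exact/asboolP.
have mz : forall y, A y -> (forall x, A x -> r y x) -> m = y.
  move=> y Ay ly; apply: um; split; first by rewrite unfold_in; exact/asboolP.
  by move=> x; rewrite unfold_in => /asboolP; exact: ly.
by rewrite -(mz z) // -(mz z').
Qed.

Lemma wo_refl x : r x x.
Proof. by have [z [/= -> h]] := @wo_min [set x] (ex_intro _ x erefl); exact: h. Qed.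

Lemma wo_total x y : r x y \/ r y x.
Proof.
have [z [/= [->|->] h]] := @wo_min [set x; y] (ex_intro _ x (or_introl erefl)).
  by left; apply: h; right.
by right; apply: h; left.
Qed.

Lemma wo_antisym x y : r x y -> r y x -> x = y.
Proof.
move=> xy yx; apply: (@wo_min_uniq [set x; y]); [by left| |by right|].
  by move=> z [->|->] //; exact: wo_refl.
by move=> z [->|->] //; exact: wo_refl.
Qed.

Lemma wo_trans x y z : r x y -> r y z -> r x z.
Proof.
move=> xy yz.
have ne : exists w, [set x; y; z] w by exists x; left; left.
have [m [/= mA h]] := @wo_min [set x; y; z] ne.
case: mA => [[mx|mx]|mx]; subst m; first by apply: h; right.
- have -> // : x = y by apply: wo_antisym => //; apply: h; left; left.
- have yz' : y = z by apply: wo_antisym => //; apply: h; left; right.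
  by rewrite -yz'.
Qed.

Definition wos x y := r x y /\ x <> y.

Lemma wos_wf : well_founded wos.
Proof.
move=> x; apply: contrapT => nA.
have [m [nAm hm]] := @wo_min [set y | ~ Acc wos y] (ex_intro _ x nA).
apply: nAm; constructor => y [ym nym]; apply: contrapT => nAy.
by apply: nym; apply: wo_antisym => //; exact: hm.
Qed.

End wo.

Lemma wo_countable (R : realType)
  (ch : forall A : set R, countable A \/ (A #= [set: R])%card)
  (J : Type) (e : J -> R) (einj : injective e) :
  exists lt : J -> J -> Prop, well_founded lt /\
    (forall x y, lt x y \/ x = y \/ lt y x) /\ (forall x, countable [set y | lt y x]).
Proof.
have [r wo] := wochoice.well_ordering_principle R.
pose s := @wos R r.
have key : exists phi : R -> R, injective phi /\ forall x, countable [set y | s y (phi x)].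
  have [[x0 Bx0]|nB] := pselect (exists x, ~ countable [set y | s y x]); last first.
    exists id; split => // x; apply: contrapT => h; apply: nB; exists x; exact: h.
  have [m [Bm hm]] := @wo_min R r wo [set x | ~ countable [set y | s y x]] (ex_intro _ x0 Bx0).
  have [//|] := ch [set y | s y m].
  rewrite card_eq_sym => /card_set_bijP[phi [phiF phiI _]].
  exists phi; split.
    move=> x y h; apply: phiI => //; exact: in_setT.
  move=> x; apply: contrapT => h.
  have [rp np] : s (phi x) m by apply: phiF.
  by apply: np; apply: (@wo_antisym R r wo _ _ rp); exact: hm.
have [phi [phiI cnt]] := key.
pose f x := phi (e x).
have fI : injective f by move=> x y /phiI /einj.
exists (fun x y => s (f x) (f y)); split; [|split].
- have gen : forall u, Acc s u -> forall x, f x = u -> Acc (fun x y => s (f x) (f y)) x.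
    move=> u; elim => {}u _ IH x ux; apply: Acc_intro => y hy.
    have hy' : s (f y) u by rewrite -ux.
    exact (IH (f y) hy' y (erefl _)).
  move=> x; exact (gen (f x) (@wos_wf R r wo (f x)) x (erefl _)).
- move=> x y; have [xy|yx] := @wo_total R r wo (f x) (f y).
    have [fxy|nxy] := pselect (f x = f y); first by right; left; exact: fI.
    by left.
  have [fxy|nxy] := pselect (f x = f y); first by right; left; exact: fI.
  by right; right; split => // h; apply: nxy.
- move=> x; apply: (sub_countable _ (cnt (e x))).
  apply/pcard_leP; apply/injfunPex; exists f; first by move=> y.
  by move=> y z _ _; exact: fI.
Qed.

(* Part 3: injection of nat -> nat -> bool into the reals *)
Section inj.
Context (R : realType).
Let w (k : nat) : R := ((3 : R) ^+ k.+1)^-1.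
Let S (b : nat -> bool) n : R := \sum_(0 <= k < n) (b k)%:R * w k.

Let w_gt0 k : 0 < w k. Proof. by rewrite /w invr_gt0 exprn_gt0. Qed.
Let wS k : w k.+1 = w k / 3.
Proof. by rewrite /w exprS invfM mulrC. Qed.

Let S_ge0 b m n : (m <= n)%N -> S b m <= S b n.
Proof.
move=> mn; rewrite /S (big_cat_nat (leq0n m) mn) /= lerDl.
by apply: sumr_ge0 => k _; rewrite mulr_ge0 // ltW.
Qed.

Let tail m j : 2 * \sum_(m.+1 <= k < m.+1 + j) w k = w m - w (m + j).
Proof.
elim: j => [|j IH].
  by rewrite addn0 big_geq ?addn0 // mulr0 subrr.
rewrite addnS big_nat_recr /=; last exact: leq_addr.
rewrite mulrDr IH addnS wS [w (m + j) / 3]mulrC.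
by field.
Qed.

Let Sbound b m n : ~~ b m -> S b n <= S b m + w m / 2.
Proof.
move=> bm; have [nm|mn] := leqP n m.
  apply: (@le_trans _ _ (S b m)); first exact: S_ge0.
  by rewrite lerDl divr_ge0 // ltW.
rewrite /S (big_cat_nat (leq0n m) (ltnW mn)) /= lerD2l.
rewrite big_ltn //= (negbTE bm) mul0r add0r.
apply: (@le_trans _ _ (\sum_(m.+1 <= k < n) w k)).
  apply: ler_sum => k _; rewrite ler_piMl ?(ltW (w_gt0 k)) //.
  by case: (b k); rewrite ?ler01 ?lexx.
have -> : n = (m.+1 + (n - m.+1))%N by rewrite subnKC.
rewrite ler_pdivlMr // mulrC tail lerBlDr lerDl; exact: ltW.
Qed.

Definition xb (b : nat -> bool) : R := sup (range (S b)).

Let sumw j : 2 * \sum_(0 <= k < j) w k = 1 - 3 * w j.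
Proof.
elim: j => [|j IH]; first by rewrite big_geq // mulr0 /w expr1 mulfV ?subrr.
rewrite big_nat_recr //= mulrDr IH wS; by field.
Qed.

Let hub b : has_ubound (range (S b)).
Proof.
exists 1 => _ [n _ <-].
apply: (@le_trans _ _ (\sum_(0 <= k < n) w k)).
  apply: ler_sum => k _; rewrite ler_piMl ?(ltW (w_gt0 k)) //.
  by case: (b k); rewrite ?ler01 ?lexx.
have h := sumw n.
have : 0 <= 3 * w n by rewrite mulr_ge0 // ltW.
move: h; set s := \sum_(0 <= k < n) w k => h h3.
have : 2 * s <= 1 by rewrite h lerBlDr lerDl.
move=> h2; apply: (@le_trans _ _ (2 * s)); last exact: h2.
rewrite ler_peMl //; last by rewrite ler1n.
rewrite /s; apply: sumr_ge0 => k _; exact: ltW.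
Qed.

Let xb_ge b n : S b n <= xb b.
Proof. by apply: ub_le_sup (hub b) _ _; exists n. Qed.

Let xb_le b y : (forall n, S b n <= y) -> xb b <= y.
Proof. by move=> h; apply: ge_sup; [exists (S b 0%N), 0%N|move=> _ [n _ <-]]. Qed.

Let xb_lt (b b' : nat -> bool) m : (forall k, (k < m)%N -> b k = b' k) -> b m -> ~~ b' m ->
  xb b' < xb b.
Proof.
move=> eqb bm nbm.
have Sm : S b m = S b' m.
  by apply: eq_big_nat => k /andP[_ km]; rewrite eqb.
apply: (@le_lt_trans _ _ (S b' m + w m / 2)).
  by apply: xb_le => n; exact: Sbound.
apply: (@lt_le_trans _ _ (S b m.+1)); last exact: xb_ge.
rewrite /S big_nat_recr //= -/(S b m) Sm bm mul1r ltrD2l.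
by rewrite ltr_pdivrMr // ltr_pMr // ltr1n.
Qed.

Lemma xb_inj : injective xb.
Proof.
move=> b b' e; apply/funext => k; apply: contrapT => nk.
have ex : exists m, b m != b' m by exists k; apply/eqP.
case: (ex_minnP ex) => m bm hm.
have eqb : forall j, (j < m)%N -> b j = b' j.
  move=> j jm; apply/eqP; apply: contraTT jm => h; rewrite -leqNgt; exact: hm.
move: bm; case bmE: (b m); case b'mE: (b' m) => // _.
  have := @xb_lt b b' m eqb; rewrite bmE b'mE => /(_ isT isT).
  by rewrite e ltxx.
have := @xb_lt b' b m (fun j jm => esym (eqb j jm)); rewrite bmE b'mE => /(_ isT isT).
by rewrite e ltxx.
Qed.

Definition code2 (g : nat -> nat -> bool) (m : nat) : bool :=
  match choice.unpickle m with Some p => g p.1 p.2 | None => false end.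

Lemma code2_inj : injective code2.
Proof.
move=> g g' e; apply/funext => n; apply/funext => k.
have := congr1 (fun h => h (choice.pickle (n, k))) e.
by rewrite /code2 choice.pickleK.
Qed.

End inj.

(* Part 4: completed sigma-algebras *)
Section completion.
Context {d : measure_display} {T : measurableType d} {R : realType}.
Context (P : probability T R).

Definition negl := [set N : set T | P.-negligible N].
Definition csig (G : set (set T)) := <<s G `|` negl >>.

Lemma csig_negl G N : P.-negligible N -> csig G N.
Proof. by move=> h; apply: sub_gen_smallest; right. Qed.

Lemma csig_sub G (A : set T) : G A -> csig G A.
Proof. by move=> h; apply: sub_gen_smallest; left. Qed.

Lemma csig_mono G G' : G `<=` G' -> csig G `<=` csig G'.
Proof.
move=> GG'; apply: smallest_sub; first exact: smallest_sigma_algebra.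
by move=> A [/GG' h|h]; [exact: csig_sub|exact: csig_negl].
Qed.

Definition symd (A B : set T) := (A `\` B) `|` (B `\` A).

Lemma csig_char G : sigma_algebra setT G -> forall E,
  csig G E <-> exists A, G A /\ P.-negligible (symd E A).
Proof.
move=> [G0 GC GU] E; split.
  move=> hE; apply: (@smallest_sub _ _ _ [set E | exists A, G A /\ P.-negligible (symd E A)] _ _ _ hE) => [|A [GA|NA]]; last 2 first.
  - by exists A; split => //; rewrite /symd !setDv setU0; exact: negligible_set0.
  - exists set0; split => //; apply: negligibleS NA.
    by move=> x [[]|[]].
  split.
  - exists set0; split => //; rewrite /symd !setDv setU0; exact: negligible_set0.
  - move=> A [B [GB NB]]; exists (setT `\` B); split; first exact: GC.
    apply: negligibleS NB => x [[[_ nAx] h]|[[_ nBx] h]].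
      by right; split => //; apply: contrapT => nBx; apply: h.
    by left; split => //; apply: contrapT => nAx; apply: h.
  - move=> A hA.
    have [B hB] := @choice nat (set T) (fun n B => G B /\ P.-negligible (symd (A n) B)) hA.
    exists (\bigcup_n B n); split; first by apply: GU => n; exact: (hB n).1.
    apply: (@negligibleS _ _ _ _ (\bigcup_n symd (A n) (B n))).
      move=> x [[[n _ Anx] nBx]|[[n _ Bnx] nAx]].
        exists n => //; left; split => // Bnx; apply: nBx; by exists n.
      exists n => //; right; split => // Anx; apply: nAx; by exists n.
    by apply: negligible_bigcup => n; exact: (hB n).2.
move=> [A [GA NE]].
pose T' := g_sigma_algebraType (G `|` negl).
have mA : measurable (A : set T') by exact: csig_sub.
have m1 : measurable (A `\` E : set T').
  by apply: csig_negl; apply: negligibleS NE => x h; right.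
have m2 : measurable (E `\` A : set T').
  by apply: csig_negl; apply: negligibleS NE => x h; left.
have -> : E = (A `\` (A `\` E)) `|` (E `\` A).
  apply/seteqP; split => x.
    by move=> Ex; have [Ax|nAx] := pselect (A x); [left; split => // -[]|right].
  by move=> [[Ax nAEx]|[]//]; apply: contrapT => nEx; apply: nAEx.
exact: (@measurableU _ T' _ _ (@measurableD _ T' _ _ mA m1) m2).
Qed.

End completion.

Section rc.
Context {d : measure_display} {T : measurableType d} {R : realType}.
Context (P : probability T R) (F : R -> set (set T)) (hF : is_filtration F)
  (hFrc : right_continuous_filtration F).

Let sj (t : R) (j : nat) : R := t + (1 - t) / (j.+1)%:R.

Let sj_gt t j : t < 1 -> t < sj t j.
Proof. by move=> t1; rewrite /sj ltrDl divr_gt0 // subr_gt0. Qed.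

Let sj_le1 t j : t < 1 -> sj t j <= 1.
Proof.
move=> t1; rewrite /sj -lerBrDl ler_pdivrMr // ler_pMr ?subr_gt0 //.
by rewrite ler1n.
Qed.

Let sj_mono t j k : t < 1 -> (j <= k)%N -> sj t k <= sj t j.
Proof.
move=> t1 jk; rewrite /sj lerD2l ler_pM2l ?subr_gt0 //.
by rewrite lef_pV2 ?posrE // ler_nat.
Qed.

Let sj_small t s : t < 1 -> t < s -> exists J, sj t J <= s.
Proof.
move=> t1 ts; set x := (1 - t) / (s - t).
have x0 : 0 <= x by rewrite /x divr_ge0 // subr_ge0 ltW.
exists (Num.Def.archi_bound x).
have hx := archi_boundP x0.
rewrite /sj -lerBrDl ler_pdivrMr // mulrC -ler_pdivrMr ?subr_gt0 //.
apply: ltW; apply: lt_le_trans hx _; by rewrite ler_nat.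
Qed.

Lemma csig_rc t E : 0 <= t < 1 -> (forall s, t < s <= 1 -> csig P (F s) E) ->
  csig P (F t) E.
Proof.
move=> /andP[t0 t1] hE.
have t01 : 0 <= t <= 1 by rewrite t0 ltW.
have [sa _] := hF.1 t t01.
have hA : forall j, exists A, F (sj t j) A /\ P.-negligible (symd E A).
  move=> j.
  have hj : 0 <= sj t j <= 1 by rewrite (le_trans t0 (ltW (sj_gt t j t1))) sj_le1.
  apply: (proj1 (csig_char P _ (hF.1 _ hj).1 E)).
  by apply: hE; rewrite sj_gt //= sj_le1.
have [A hA'] := @choice nat (set T) _ hA.
pose L := \bigcap_n \bigcup_(j in [set j | (n <= j)%N]) A j.
apply: (proj2 (csig_char P _ sa E)); exists L; split.
  rewrite hFrc; last by rewrite t0.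
  move=> s /= /andP[ts s1].
  have [J hJ] := sj_small t s t1 ts.
  have s01 : 0 <= s <= 1 by rewrite s1 (ltW (le_lt_trans t0 ts)).
  have [sas _] := hF.1 s s01.
  have -> : L = \bigcap_n \bigcup_(j in [set j | (n <= j)%N]) A (j + J)%N.
    apply/seteqP; split => x hx n _.
      have [j /= nj Ajx] := hx (n + J)%N I.
      exists (j - J)%N; first by rewrite /= leq_subRL ?(leq_trans (leq_addl _ _) nj) // addnC.
      by rewrite subnK // (leq_trans (leq_addl _ _) nj).
    have [j /= nj Ajx] := hx n I.
    by exists (j + J)%N => //=; rewrite (leq_trans nj) // leq_addr.
  rewrite -(sigma_algebra_id sas).
  pose T' := g_sigma_algebraType (F s).
  apply: (@bigcapT_measurable _ T') => n.
  apply: (@bigcup_measurable _ T') => j _.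
  apply: sub_gen_smallest.
  have hj := (hA' (j + J)%N).1.
  apply: (hF.2 (sj t (j + J)) s) => //.
    exact: le_trans t0 (ltW (sj_gt _ _ t1)).
  apply: le_trans hJ; apply: sj_mono => //; exact: leq_addl.
apply: (@negligibleS _ _ _ _ (\bigcup_j symd E (A j))).
  move=> x [[Ex nLx]|[Lx nEx]].
    have [n _ hn] : exists2 n, True & ~ (\bigcup_(j in [set j | (n <= j)%N]) A j) x.
      apply: contrapT => h; apply: nLx => n _; apply: contrapT => h'; apply: h; by exists n.
    exists n => //; left; split => // Anx; apply: hn; exists n => //=; exact: leqnn.
  have [j _ Ajx] := Lx 0%N I.
  by exists j => //; right.
by apply: negligible_bigcup => j; exact: (hA' j).2.
Qed.
End rc.

Section dyadic.
Context {R : realType}.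

Lemma pow2_small (e : R) : 0 < e -> exists J, 1 / (2 ^ J)%:R < e.
Proof.
move=> e0; exists (Num.Def.archi_bound e^-1).
have ei : 0 <= e^-1 by rewrite invr_ge0 ltW.
have h := archi_boundP ei.
rewrite ltr_pdivrMr // mulrC -ltr_pdivrMr // div1r.
apply: lt_le_trans h _; rewrite ler_nat; apply: ltnW; exact: ltn_expl.
Qed.

Definition dy (i : nat * nat) : R := (minn i.2 (2 ^ i.1))%:R / (2 ^ i.1)%:R.

Lemma dy01 i : 0 <= dy i <= 1.
Proof.
rewrite /dy divr_ge0 //= ler_pdivrMr ?ltr0n ?expn_gt0 // mul1r ler_nat.
exact: geq_minr.
Qed.

Lemma dy_ge0 i : 0 <= dy i.
Proof. by rewrite /dy divr_ge0. Qed.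

Lemma dy1 : dy (0%N, 1%N) = 1.
Proof. by rewrite /dy /= expn0 divr1. Qed.

Lemma dy_near (t : R) j : 0 <= t < 1 ->
  exists i, t < dy i /\ dy i <= t + 1 / (2 ^ j)%:R.
Proof.
move=> /andP[t0 t1].
set N := (2 ^ j)%N; have N0 : (0 < N)%N by rewrite expn_gt0.
set x := t * N%:R.
have ex : exists m, x < m%:R.
  by exists N; rewrite /x -[X in _ < X]mul1r ltr_pM2r // ltr0n.
case: (ex_minnP ex) => m xm hm.
have mN : (m <= N)%N.
  by apply: hm; rewrite /x -[X in _ < X]mul1r ltr_pM2r // ltr0n.
exists (j, m); rewrite /dy /= -/N (minn_idPl mN).
split; first by rewrite ltr_pdivlMr ?ltr0n.
rewrite -[t + _](mulfK (_ : N%:R != 0)) ?pnatr_eq0 -?lt0n //.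
rewrite ler_pM2r ?invr_gt0 ?ltr0n // mulrDl div1r mulVf ?pnatr_eq0 -?lt0n // -/x.
case: m xm hm mN => [|m] xm hm mN.
  by move: xm; rewrite ltNge /x mulr_ge0 // ler0n.
rewrite -natr1 lerD2r leNgt; apply/negP => h.
by have := hm m h; rewrite ltnn.
Qed.

Lemma seq_right (t : R) : 0 <= t < 1 -> exists ij : nat -> nat * nat,
  [/\ forall j, t < dy (ij j), forall j, dy (ij j) <= t + 1 / (2 ^ j)%:R &
      (fun j => dy (ij j)) @ \oo --> t].
Proof.
move=> ht; have [ij hij] := @choice nat (nat * nat) _ (fun j => dy_near t j ht).
exists ij; split; [by move=> j; case: (hij j)|by move=> j; case: (hij j)|].
apply/cvgrPdist_lt => e e0.
have [J hJ] := pow2_small e e0.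
exists J => // j /= Jj.
have [h1 h2] := hij j.
rewrite ltr0_norm ?subr_lt0 // opprB ltrBlDl.
apply: le_lt_trans h2 _; rewrite ltrD2l.
apply: le_lt_trans hJ; rewrite ler_pdivrMr ?ltr0n ?expn_gt0 //.
rewrite mulrC -ler_pdivrMr ?ltr0n ?expn_gt0 // !div1r invrK.
by rewrite ler_nat leq_pexp2l.
Qed.

End dyadic.

(* Part 5: the chain of almost-decreasing sets for the requirement types *)
Definition tailp (g : nat -> nat -> bool) :=
  forall k, exists N, forall n, (N <= n)%N -> g n k.
Definition Hg (g : nat -> nat -> bool) (A : set nat) :=
  tailp g -> exists a : nat -> nat, (forall k, (a k < a k.+1)%N) /\
    A = range a /\ forall k, g (a k) k.

Lemma Hg_dense g B : infs B -> exists A, A `<=` B /\ infs A /\ Hg g A.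
Proof.
move=> iB; have [tg|ntg] := pselect (tailp g); last first.
  by exists B; split => //; split => // /ntg.
have [N hN] := @choice nat nat _ tg.
have [pk hpk] := @choice nat nat (fun m n => (m <= n)%N /\ B n) iB.
pose a := fix a k := if k is k'.+1 then pk (maxn (N k) (a k').+1) else pk (N 0%N).
have ha k : (a k < a k.+1)%N.
  have := (hpk (maxn (N k.+1) (a k).+1)).1; rewrite /= geq_max => /andP[_ h].
  exact: h.
have hNa k : (N k <= a k)%N.
  case: k => [|k]; first exact: (hpk _).1.
  have := (hpk (maxn (N k.+1) (a k).+1)).1; rewrite /= geq_max => /andP[h _].
  exact: h.
have hBa k : B (a k) by case: k => [|k]; exact: (hpk _).2.
exists (range a); split; first by move=> _ [k _ <-].
split.
  move=> M; exists (a M); split; last by exists M.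
  exact: (@incr_ge a ha).
move=> _; exists a; split => //; split => // k; apply: hN; exact: hNa.
Qed.

Lemma chain_exists (R : realType) (hCH : CH R) :
  exists (lt : (nat -> nat -> bool) -> (nat -> nat -> bool) -> Prop)
         (A : (nat -> nat -> bool) -> set nat),
    (forall x y, lt x y \/ x = y \/ lt y x) /\
    forall x, infs (A x) /\ Hg x (A x) /\ forall y, lt y x -> subq (A x) (A y).
Proof.
have einj : injective (fun g => @xb R (code2 g)).
  by move=> g g' /xb_inj /code2_inj.
have [lt [wf [tri cnt]]] := @wo_countable R hCH _ _ einj.
exists lt, (@chainA _ lt wf Hg); split => // x.
exact: (@chainA_prop _ lt wf tri cnt Hg Hg_dense x).
Qed.

Section main.
Context (d : measure_display) (T : measurableType d) (R : realType)
  (F : R -> set (set T)) (hF : is_filtration F)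
  (hFrc : right_continuous_filtration F)
  (Pfam : set (probability T R))
  (Yn : nat -> R -> T -> R)
  (hYad : forall n, adapted (Fstar Pfam F) (Yn n))
  (YP : probability T R -> R -> T -> R)
  (hYP : forall P, Pfam P -> cadlag (YP P) /\
      forall t, 0 <= t <= 1 -> cvg_in_prob P (fun n => Yn n t) (YP P t))
  (lt : (nat -> nat -> bool) -> (nat -> nat -> bool) -> Prop)
  (Ach : (nat -> nat -> bool) -> set nat)
  (tri : forall x y, lt x y \/ x = y \/ lt y x)
  (hAch : forall x, infs (Ach x) /\ Hg x (Ach x) /\
     forall y, lt y x -> subq (Ach x) (Ach y)).

Let eps (k : nat) : R := 1 / (2 ^ k.+1)%:R.

Let eps_gt0 k : 0 < eps k.
Proof. by rewrite /eps divr_gt0 // ltr0n expn_gt0. Qed.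

Let eps_small e : 0 < e -> exists k0, forall k, (k0 <= k)%N -> eps k < e.
Proof.
move=> e0; have [J hJ] := pow2_small e e0; exists J => k Jk.
apply: le_lt_trans hJ; rewrite /eps !div1r lef_pV2 ?posrE ?ltr0n ?expn_gt0 //.
by rewrite ler_nat leq_pexp2l // ltnW.
Qed.

Let bc (P : probability T R) (M : nat -> set T) :
  (forall k, measurable (M k)) -> (forall k, (P (M k) <= (eps k)%:E)%E) ->
  P (lim_sup_set M) = 0%E.
Proof.
move=> mM hM; apply: lim_sup_set_cvg0 => //.
apply: (@le_lt_trans _ _ 1%:E); last exact: ltey.
apply: le_trans (epsilon_trick0 xpredT (@ler01 R)).
apply: lee_nneseries => [n _ _|n _]; first exact: measure_ge0.
exact: hM.
Qed.

Definition conv (A : set nat) (u : nat -> R) (v : R) :=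
  forall e, 0 < e -> exists N, forall n, (N <= n)%N -> A n -> `|u n - v| < e.

Lemma conv_subq A B u v : subq B A -> conv A u v -> conv B u v.
Proof.
move=> [N0 hN0] h e e0; have [N hN] := h e e0.
exists (maxn N N0) => n hn Bn; apply: hN; first exact: leq_trans (leq_maxl _ _) hn.
apply: hN0 => //; exact: leq_trans (leq_maxr _ _) hn.
Qed.

Lemma conv_uniq A u v v' : infs A -> conv A u v -> conv A u v' -> v = v'.
Proof.
move=> iA h h'; apply/eqP; rewrite -subr_eq0 -normr_eq0; apply/eqP.
apply/eqP; rewrite eq_le normr_ge0 andbT; apply/ler_addgt0Pr => e e0.
rewrite add0r.
have [N hN] := h (e / 2) (divr_gt0 e0 (ltr0n _ 2)).
have [N' hN'] := h' (e / 2) (divr_gt0 e0 (ltr0n _ 2)).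
have [n [hn An]] := iA (maxn N N').
have := hN n (leq_trans (leq_maxl _ _) hn) An.
have := hN' n (leq_trans (leq_maxr _ _) hn) An.
move=> h2 h1; rewrite (_ : v - v' = (u n - v') - (u n - v)); last by ring.
apply: le_trans (ler_normB _ _) _; rewrite [e]splitr; apply: ltW; exact: ltrD.
Qed.

Definition evl (u : nat -> R) (v : R) :=
  exists x, forall y, (x = y \/ lt x y) -> conv (Ach y) u v.

Lemma evl_uniq u v v' : evl u v -> evl u v' -> v = v'.
Proof.
move=> [x hx] [x' hx'].
have [l|[e|l]] := tri x x'.
- exact: (@conv_uniq _ _ _ _ (hAch x').1 (hx x' (or_intror l)) (hx' x' (or_introl erefl))).
- subst x'; exact: (@conv_uniq _ _ _ _ (hAch x).1 (hx x (or_introl erefl)) (hx' x (or_introl erefl))).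
- exact: (@conv_uniq _ _ _ _ (hAch x).1 (hx x (or_introl erefl)) (hx' x (or_intror l))).
Qed.

Definition Z (i : nat * nat) (w : T) : R :=
  match pselect (exists v, evl (fun n => Yn n (dy i) w) v) with
  | left h => proj1_sig (cid h) | right _ => 0 end.

Lemma Z_eq i w v : evl (fun n => Yn n (dy i) w) v -> Z i w = v.
Proof.
move=> h; rewrite /Z; case: pselect => [h'|]; last by move=> []; exists v.
by case: cid => v' hv' /=; exact: evl_uniq hv' h.
Qed.

Lemma Z_good P (PP : Pfam P) i : exists (N0 : set T) (a : nat -> nat),
  [/\ measurable N0, P N0 = 0%E,
    forall w, ~ N0 w -> Z i w = YP P (dy i) w &
    forall w, ~ N0 w -> (fun m => Yn (a m) (dy i) w) @ \oo --> YP P (dy i) w].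
Proof.
set t := dy i; have t01 : 0 <= t <= 1 := dy01 i.
pose g : nat -> nat -> bool := fun n k => `[< exists M, [/\ measurable M,
  [set w | eps k < `|Yn n t w - YP P t w|] `<=` M & (P M <= (eps k)%:E)%E] >].
have tg : tailp g.
  move=> k; have := (hYP P PP).2 t t01 (eps k) (eps_gt0 k) (eps k) (eps_gt0 k).
  case=> N _ hN; exists N => n Nn; apply/asboolP; exact: hN.
have [a [ha [Ae hga]]] := (hAch g).2.1 tg.
have hM k : exists M, [/\ measurable M,
    [set w | eps k < `|Yn (a k) t w - YP P t w|] `<=` M & (P M <= (eps k)%:E)%E].
  exact/asboolP/hga.
have [M hMk] := choice hM.
pose N0 := lim_sup_set M.
have mM k : measurable (M k) by case: (hMk k).
have mN0 : measurable N0.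
  apply: bigcapT_measurable => n; apply: bigcup_measurable => k _; exact: mM.
have PN0 : P N0 = 0%E.
  by apply: bc => // k; case: (hMk k).
have nearw w : ~ N0 w -> exists K, forall k, (K <= k)%N ->
    `|Yn (a k) t w - YP P t w| <= eps k.
  move=> nw.
  have [K _ hK] : exists2 K, True & ~ (\bigcup_(j in [set j | (K <= j)%N]) M j) w.
    apply: contrapT => h; apply: nw => n _; apply: contrapT => h'; apply: h.
    by exists n.
  exists K => k Kk; rewrite leNgt; apply/negP => h; apply: hK; exists k => //.
  by case: (hMk k) => _ /(_ w h).
exists N0, a; split => //.
  move=> w nw; apply: Z_eq; exists g => y hy.
  have cg : conv (Ach g) (fun n => Yn n t w) (YP P t w).
    move=> e e0; have [K hK] := nearw w nw; have [k0 hk0] := eps_small e e0.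
    exists (a (maxn K k0)) => n hn; rewrite Ae => -[k _ kn]; subst n.
    have hk : (maxn K k0 <= k)%N := @incr_le a ha _ _ hn.
    apply: le_lt_trans (hK k _) (hk0 k _).
      exact: leq_trans (leq_maxl _ _) hk.
    exact: leq_trans (leq_maxr _ _) hk.
  case: hy => [<-//|l]; exact: conv_subq ((hAch y).2.2 g l) cg.
move=> w nw; have [K hK] := nearw w nw; apply/cvgrPdist_lt => e e0.
have [k0 hk0] := eps_small e e0.
exists (maxn K k0) => // k /= hk.
rewrite distrC; apply: le_lt_trans (hK k _) (hk0 k _).
  exact: leq_trans (leq_maxl _ _) hk.
exact: leq_trans (leq_maxr _ _) hk.
Qed.

Lemma Z_adapted P (PP : Pfam P) i B : measurable B ->
  csig P (F (dy i)) (Z i @^-1` B).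
Proof.
move=> mB.
have [N0 [a [mN0 PN0 hZ hcv]]] := Z_good P PP i.
pose T' := g_sigma_algebraType (F (dy i) `|` negl P).
have nN0 : P.-negligible N0 by exists N0; split.
have mN0' : measurable (N0 : set T') by exact: csig_negl.
have mD : measurable (~` N0 : set T') by exact: measurableC.
have mh m : measurable_fun (~` N0 : set T') (fun w : T' => Yn (a m) (dy i) w).
  move=> _ Y mY; apply: measurableI => //.
  exact: (hYad (a m) (dy i) (dy01 i) Y mY P PP).
have mZ : measurable_fun (~` N0 : set T') (Z i : T' -> R).
  apply: (measurable_realfun.measurable_fun_cvg mh) => x nx; rewrite hZ //; exact: hcv.
have h1 : measurable ((~` N0) `&` (Z i : T' -> R) @^-1` B : set T') by exact: mZ.
have h2 : measurable (N0 `&` (Z i : T' -> R) @^-1` B : set T').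
  apply: csig_negl; apply: negligibleS nN0; exact: subIsetl.
have -> : Z i @^-1` B = ((~` N0) `&` Z i @^-1` B) `|` (N0 `&` Z i @^-1` B).
  by rewrite -setIUl setUC setUCr setTI.
exact: (@measurableU _ T' _ _ h1 h2).
Qed.

Definition cpath (c : R -> R) :=
  (forall t, 0 <= t < 1 -> c @ t^'+ --> c t) /\
  (forall t, 0 < t <= 1 -> cvg (c @ t^'-)).
Definition Spec w (c : R -> R) := cpath c /\ forall i, c (dy i) = Z i w.
Definition cw w : R -> R :=
  match pselect (exists c, Spec w c) with
  | left h => proj1_sig (cid h) | right _ => fun _ => 0 end.
Definition Yfin (t : R) (w : T) := cw w t.

Lemma cw_path w : cpath (cw w).
Proof.
rewrite /cw; case: pselect => [h|_]; first by case: cid => c [].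
split => t _; [exact: cvg_cst|exact: is_cvg_cst].
Qed.

Lemma cw_spec w : (exists c, Spec w c) -> Spec w (cw w).
Proof. by rewrite /cw; case: pselect => // h _; case: cid. Qed.

Lemma rc_seq (c : R -> R) t (ij : nat -> nat * nat) :
  c @ t^'+ --> c t -> (forall j, t < dy (ij j)) ->
  (fun j => dy (ij j)) @ \oo --> t ->
  (fun j => c (dy (ij j))) @ \oo --> c t.
Proof.
move=> hc hgt hcv; have := (proj1 (cvg_at_rightP c t (c t)) hc).
by apply; split.
Qed.

Lemma path_eq c1 c2 : cpath c1 -> cpath c2 -> (forall i, c1 (dy i) = c2 (dy i)) ->
  forall t, 0 <= t <= 1 -> c1 t = c2 t.
Proof.
move=> [h1 _] [h2 _] e t /andP[t0 t1']; move: t1'; rewrite le_eqVlt => /orP[/eqP te|t1].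
  by subst t; rewrite -dy1 e.
have ht : 0 <= t < 1 by rewrite t0 t1.
have [ij [hgt _ hcv]] := seq_right t ht.
have s1 := @rc_seq c1 t ij (h1 t ht) hgt hcv.
have s2 := @rc_seq c2 t ij (h2 t ht) hgt hcv.
have ef : (fun j => c1 (dy (ij j))) = (fun j => c2 (dy (ij j))).
  by apply/funext => j; rewrite e.
rewrite ef in s1; exact: (cvg_unique _ s1 s2).
Qed.

Lemma Y_ae P (PP : Pfam P) : exists Nb, [/\ P.-negligible Nb,
  (forall w, ~ Nb w -> exists c, Spec w c) &
  forall w, ~ Nb w -> forall t, 0 <= t <= 1 -> Yfin t w = YP P t w].
Proof.
have [N0 hN0] := @choice (nat * nat) (set T) _ (Z_good P PP).
pose Nb := \bigcup_n \bigcup_k N0 (n, k).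
have hZ w : ~ Nb w -> forall i, Z i w = YP P (dy i) w.
  move=> nw [n k]; have [a [_ _ h _]] := hN0 (n, k); apply: h => h'.
  by apply: nw; exists n => //; exists k.
have sp w : ~ Nb w -> Spec w (fun s => YP P s w).
  move=> nw; split; last by move=> i; rewrite hZ.
  exact: ((hYP P PP).1 w).
exists Nb; split.
- apply: negligible_bigcup => n; apply: negligible_bigcup => k.
  have [a [m0 p0 _ _]] := hN0 (n, k); by exists (N0 (n, k)); split.
- by move=> w nw; exists (fun s => YP P s w); exact: sp.
- move=> w nw t t01; have [p1 e1] := cw_spec w (ex_intro _ _ (sp w nw)).
  apply: (@path_eq (cw w) (fun s => YP P s w) p1 (sp w nw).1 _ t t01) => i.
  by rewrite e1; exact: hZ.
Qed.

Lemma Y_adapted P (PP : Pfam P) t B : 0 <= t <= 1 -> measurable B ->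
  csig P (F t) (Yfin t @^-1` B).
Proof.
move=> t01 mB.
have [Nb [nNb hG _]] := Y_ae P PP.
pose G := [set w | exists c, Spec w c].
have nG : P.-negligible (~` G) by apply: negligibleS nNb => w nGw; apply: contrapT => /hG.
have pre s (h : nat -> T -> R) :
    (forall m Y, measurable Y -> csig P (F s) (h m @^-1` Y)) ->
    (forall w, G w -> (fun m => h m w) @ \oo --> Yfin t w) ->
    csig P (F s) (Yfin t @^-1` B).
  move=> hm hcv.
  pose T' := g_sigma_algebraType (F s `|` negl P).
  have mG : measurable (G : set T').
    rewrite -[G]setCK; apply: measurableC; exact: csig_negl.
  have mh m : measurable_fun (G : set T') (h m : T' -> R).
    by move=> _ Y mY; apply: measurableI => //; exact: hm.
  have mY : measurable_fun (G : set T') (Yfin t : T' -> R).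
    exact: (measurable_realfun.measurable_fun_cvg mh).
  have h1 : measurable (G `&` (Yfin t : T' -> R) @^-1` B : set T') by exact: mY.
  have h2 : measurable (~` G `&` (Yfin t : T' -> R) @^-1` B : set T').
    apply: csig_negl; apply: negligibleS nG; exact: subIsetl.
  have -> : Yfin t @^-1` B = (G `&` Yfin t @^-1` B) `|` (~` G `&` Yfin t @^-1` B).
    by rewrite -setIUl setUCr setTI.
  exact: (@measurableU _ T' _ _ h1 h2).
move: (t01) => /andP[t0]; rewrite le_eqVlt => /orP[/eqP te|t1].
  subst t; apply: (pre 1 (fun _ => Z (0%N, 1%N))).
    by move=> _ Y mY; rewrite -[in F 1]dy1; exact: Z_adapted.
  move=> w Gw; have [_ e] := cw_spec w Gw.
  rewrite /Yfin -[in cw w 1]dy1 e; exact: cvg_cst.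
have ht : 0 <= t < 1 by rewrite t0 t1.

apply: (csig_rc P F hF hFrc t _ ht) => s /andP[ts s1].
have [ij [hgt hle hcv]] := seq_right t ht.
have st0 : 0 < s - t by rewrite subr_gt0.
have [J hJ] := pow2_small (s - t) st0.
apply: (pre s (fun m => Z (ij (m + J)%N))).
  move=> m Y mY; apply: (csig_mono P (F (dy (ij (m + J)%N)))).
    apply: (hF.2 _ _ (dy_ge0 _)) => //.
    apply: (le_trans (hle _)); rewrite -lerBrDl; apply: ltW; apply: le_lt_trans hJ.
    rewrite ler_pdivrMr ?ltr0n ?expn_gt0 // mulrC -ler_pdivrMr ?ltr0n ?expn_gt0 //.
    rewrite !div1r invrK ler_nat leq_pexp2l //; exact: leq_addl.
  exact: Z_adapted.
move=> w Gw; have [cp e] := cw_spec w Gw.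
have hh := @rc_seq (cw w) t ij (cp.1 t ht) hgt hcv.
have -> : (fun m => Z (ij (m + J)%N) w) = (fun m => cw w (dy (ij (m + J)%N))).
  by apply/funext => m; rewrite e.
by rewrite /Yfin; move: hh; rewrite -(cvg_shiftn J).
Qed.

End main.

Theorem lemma2p5 (d : measure_display) (T : measurableType d) (R : realType)
  (hCH : CH R)
  (F : R -> set (set T)) (hF : is_filtration F)
  (hFrc : right_continuous_filtration F)
  (Pfam : set (probability T R))
  (Yn : nat -> R -> T -> R)
  (hYad : forall n, adapted (Fstar Pfam F) (Yn n))
  (hYcl : forall n, cadlag (Yn n))
  (YP : probability T R -> R -> T -> R)
  (hYP : forall P, Pfam P -> cadlag (YP P) /\
      forall t, 0 <= t <= 1 -> cvg_in_prob P (fun n => Yn n t) (YP P t)) :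
  exists Y : R -> T -> R,
    adapted (Fstar Pfam F) Y /\ cadlag Y /\
    forall P, Pfam P ->
      {ae P, forall w, forall t, 0 <= t <= 1 -> Y t w = YP P t w}.
Proof.
have [lt [Ach [tri hAch]]] := @chain_exists R hCH.
exists (Yfin d T R Yn lt Ach); split; [|split].
- move=> t t01 B mB P PP.
  exact: (@Y_adapted d T R F hF hFrc Pfam Yn hYad YP hYP lt Ach tri hAch P PP t B t01 mB).
- move=> w; exact: (@cw_path d T R Yn lt Ach w).
- move=> P PP.
  have [Nb [nNb _ hY]] := @Y_ae d T R Pfam Yn YP hYP lt Ach tri hAch P PP.
  apply: (negligibleS _ nNb) => w /= nw; apply: contrapT => h; apply: nw => t t01.
  exact: hY.
Qed.
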